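(* Let $I_n:=\iint_T \frac{(-\ln xy)^n}{xy}\,dx\,dy$. The series $\sum_{n=0}^\infty(-1)^n\frac{I_n}{n!}$ diverges, but it is Abel summable to $1/2$, i.e. $\lim_{t\to1^-}\sum_{n=0}^\infty(-1)^n\frac{I_n}{n!}t^n=\frac12$.
   Context: $T:=\{(x,y)\in[0,1]^2 : x+y\ge 1\}$. *)

(* Defs.v *)
From Stdlib Require Import Reals.
Open Scope R_scope.

Definition integrand (n : nat) (x y : R) : R := (- ln (x * y)) ^ n / (x * y).

Definition improper_int (g : R -> R) (a b L : R) : Prop :=
  (forall c d, a < c -> c <= d -> d < b -> inhabited (Riemann_integrable g c d)) /\
  (forall eps, 0 < eps -> exists delta, 0 < delta /\
     forall c d (pr : Riemann_integrable g c d),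
       a < c -> c < a + delta -> c <= d -> b - delta < d -> d < b ->
       Rabs (RiemannInt pr - L) < eps).

(* T = {(x,y) in [0,1]^2 : x + y >= 1}.  I_n = iint_T integrand n, written as the
   iterated integral  int_0^1 ( int_{1-x}^1 integrand n x y dy ) dx
   (the integrand is nonnegative on T, so this equals the double integral). *)
Definition is_I (n : nat) (L : R) : Prop :=
  exists g : R -> R,
    (forall x, 0 < x < 1 ->
       exists pr : Riemann_integrable (fun y => integrand n x y) (1 - x) 1,
         RiemannInt pr = g x) /\
    improper_int g 0 1 L.

(* Main.v *)
Require Import Defs.
From Stdlib Require Import Reals Lra Lia ClassicalEpsilon.
From Coquelicot Require Import Coquelicot.
Open Scope R_scope.

Definition lim01 (F : R -> R -> R) (L : R) : Prop :=
  forall eps, 0 < eps -> exists delta, 0 < delta /\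
    forall c d, 0 < c -> c < delta -> c <= d -> 1 - delta < d -> d < 1 ->
      Rabs (F c d - L) < eps.

Lemma lim01_const k : lim01 (fun _ _ => k) k.
Proof. intros e He. exists 1. split; [lra|]. intros. rewrite Rminus_diag, Rabs_R0. lra. Qed.

Lemma lim01_plus F G L1 L2 : lim01 F L1 -> lim01 G L2 ->
  lim01 (fun c d => F c d + G c d) (L1 + L2).
Proof.
  intros HF HG e He.
  destruct (HF (e/2)) as [d1 [Hd1 H1]]; [lra|].
  destruct (HG (e/2)) as [d2 [Hd2 H2]]; [lra|].
  exists (Rmin d1 d2). split; [now apply Rmin_pos|].
  intros c d Hc Hcd Hcd' Hd Hd1'.
  assert (c < d1) by (eapply Rlt_le_trans; [exact Hcd| apply Rmin_l]).
  assert (c < d2) by (eapply Rlt_le_trans; [exact Hcd| apply Rmin_r]).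
  assert (1 - d1 < d) by (pose proof (Rmin_l d1 d2); lra).
  assert (1 - d2 < d) by (pose proof (Rmin_r d1 d2); lra).
  specialize (H1 c d Hc H Hcd' H3 Hd1'). specialize (H2 c d Hc H0 Hcd' H4 Hd1').
  replace (F c d + G c d - (L1 + L2)) with ((F c d - L1) + (G c d - L2)) by ring.
  eapply Rle_lt_trans; [apply Rabs_triang|]. lra.
Qed.

Lemma lim01_scal F L k : lim01 F L -> lim01 (fun c d => k * F c d) (k * L).
Proof.
  intros HF e He.
  destruct (HF (e / (Rabs k + 1))) as [d1 [Hd1 H1]].
  { apply Rdiv_lt_0_compat; [lra|]. pose proof (Rabs_pos k); lra. }
  exists d1. split; [lra|]. intros c d Hc Hcd Hcd' Hd Hd1'.
  specialize (H1 c d Hc Hcd Hcd' Hd Hd1').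
  replace (k * F c d - k * L) with (k * (F c d - L)) by ring.
  rewrite Rabs_mult.
  pose proof (Rabs_pos k). pose proof (Rabs_pos (F c d - L)).
  apply Rle_lt_trans with ((Rabs k + 1) * Rabs (F c d - L)).
  { apply Rmult_le_compat_r; lra. }
  apply Rmult_lt_reg_l with (/ (Rabs k + 1)). { apply Rinv_0_lt_compat; lra. }
  rewrite <- Rmult_assoc, Rinv_l by lra. rewrite Rmult_1_l.
  replace (/ (Rabs k + 1) * e) with (e / (Rabs k + 1)) by (unfold Rdiv; ring). exact H1.
Qed.

Lemma lim01_cmp F G L1 L2 : lim01 F L1 -> lim01 G L2 ->
  (exists d0, 0 < d0 /\ forall c d, 0 < c -> c < d0 -> c <= d -> 1 - d0 < d -> d < 1 ->
     F c d <= G c d + (c + (1 - d))) -> L1 <= L2.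
Proof.
  intros HF HG [d0 [Hd0 H]].
  destruct (Rle_or_lt L1 L2) as [|Hlt]; [assumption|]. exfalso.
  set (e := (L1 - L2) / 8).
  destruct (HF e) as [d1 [Hd1 H1]]; [unfold e; lra|].
  destruct (HG e) as [d2 [Hd2 H2]]; [unfold e; lra|].
  set (r := Rmin (Rmin (Rmin d1 d2) (Rmin d0 e)) (1/4) / 2).
  assert (Hr : 0 < r).
  { unfold r. apply Rdiv_lt_0_compat; [|lra]. repeat apply Rmin_pos; unfold e; lra. }
  assert (r < d1 /\ r < d2 /\ r < d0 /\ r <= e /\ r <= 1/4).
  { unfold r in *. pose proof (Rmin_l (Rmin (Rmin d1 d2) (Rmin d0 e)) (1/4)).
    pose proof (Rmin_r (Rmin (Rmin d1 d2) (Rmin d0 e)) (1/4)).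
    pose proof (Rmin_l (Rmin d1 d2) (Rmin d0 e)). pose proof (Rmin_r (Rmin d1 d2) (Rmin d0 e)).
    pose proof (Rmin_l d1 d2). pose proof (Rmin_r d1 d2).
    pose proof (Rmin_l d0 e). pose proof (Rmin_r d0 e). lra. }
  destruct H0 as [? [? [? [? ?]]]].
  specialize (H1 r (1 - r) Hr ltac:(lra) ltac:(lra) ltac:(lra) ltac:(lra)).
  specialize (H2 r (1 - r) Hr ltac:(lra) ltac:(lra) ltac:(lra) ltac:(lra)).
  specialize (H r (1 - r) Hr ltac:(lra) ltac:(lra) ltac:(lra) ltac:(lra)).
  apply Rabs_def2 in H1. apply Rabs_def2 in H2. unfold e in *. lra.
Qed.



Lemma lim01_sum (F : nat -> R -> R -> R) (L : nat -> R) N :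
  (forall n, lim01 (F n) (L n)) ->
  lim01 (fun c d => sum_f_R0 (fun n => F n c d) N) (sum_f_R0 L N).
Proof.
  intros H. induction N as [|N IH]; simpl; [apply H|].
  apply lim01_plus; auto.
Qed.

Lemma RInt_sum (f : nat -> R -> R) a b N :
  (forall n, ex_RInt (f n) a b) ->
  ex_RInt (fun x => sum_f_R0 (fun n => f n x) N) a b /\
  RInt (fun x => sum_f_R0 (fun n => f n x) N) a b = sum_f_R0 (fun n => RInt (f n) a b) N.
Proof.
  intros H. induction N as [|N [IH1 IH2]]; simpl.
  - split; [apply H| reflexivity].
  - split.
    + apply (ex_RInt_plus (V:=R_CompleteNormedModule)); auto.
    + rewrite <- IH2. apply (RInt_plus (V:=R_CompleteNormedModule)); auto.
Qed.

Lemma Chasles3 h c c0 d0 d :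
  ex_RInt h c c0 -> ex_RInt h c0 d0 -> ex_RInt h d0 d ->
  RInt h c d = RInt h c c0 + RInt h c0 d0 + RInt h d0 d.
Proof.
  intros H1 H2 H3.
  assert (E1 : RInt h c d0 = RInt h c c0 + RInt h c0 d0).
  { symmetry. apply (RInt_Chasles (V:=R_CompleteNormedModule)); auto. }
  assert (ex_RInt h c d0) by (apply (ex_RInt_Chasles (V:=R_CompleteNormedModule)) with c0; auto).
  rewrite <- E1. symmetry. apply (RInt_Chasles (V:=R_CompleteNormedModule)); auto.
Qed.

Lemma improper_to_lim01 g L h : improper_int g 0 1 L ->
  (forall x, 0 < x < 1 -> g x = h x) -> lim01 (RInt h) L.
Proof.
  intros [Hex Hlim] Hgh e He.
  destruct (Hlim e He) as [delta [Hd H]].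
  exists delta. split; auto. intros c d Hc Hcd Hcd' Hd1 Hd2.
  destruct (Hex c d Hc Hcd' Hd2) as [pr].
  specialize (H c d pr Hc ltac:(lra) Hcd' Hd1 Hd2).
  rewrite <- RInt_Reals in H.
  rewrite <- (RInt_ext g h). exact H.
  intros x Hx. apply Hgh. rewrite Rmin_left, Rmax_right in Hx by lra. lra.
Qed.

Lemma lim01_to_improper h L :
  (forall c d, 0 < c -> c <= d -> d < 1 -> ex_RInt h c d) ->
  lim01 (RInt h) L -> improper_int h 0 1 L.
Proof.
  intros Hex Hl. split.
  - intros c d Hc Hcd Hd. constructor. apply ex_RInt_Reals_0. apply Hex; auto.
  - intros e He. destruct (Hl e He) as [delta [Hd H]]. exists delta. split; auto.
    intros c d pr Hc Hcd Hcd' Hd1 Hd2. rewrite <- RInt_Reals.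
    apply H; auto; lra.
Qed.

Lemma exists_lim01 h K :
  (forall c d, 0 < c -> c <= d -> d < 1 -> ex_RInt h c d) ->
  (forall x, 0 < x < 1 -> 0 <= h x) ->
  (forall c d, 0 < c -> c <= d -> d < 1 -> RInt h c d <= K) ->
  exists L, lim01 (RInt h) L.
Proof.
  intros Hex Hpos HK.
  set (E := fun v => exists c d, 0 < c /\ c <= d /\ d < 1 /\ v = RInt h c d).
  assert (Hb : bound E).
  { exists K. intros v [c [d [? [? [? ->]]]]]. apply HK; auto. }
  assert (Hne : exists v, E v).
  { exists (RInt h (1/2) (1/2)). exists (1/2), (1/2). repeat split; lra. }
  destruct (completeness E Hb Hne) as [L [HLub HLlub]].
  exists L. intros e He.
  assert (Hv : exists v, E v /\ L - e < v).
  { apply Classical_Pred_Type.not_all_not_ex. intros Hn.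
    assert (L <= L - e); [|lra].
    apply HLlub. intros v Ev. destruct (Rle_or_lt v (L - e)) as [|Hlt]; auto.
    exfalso. apply (Hn v). auto. }
  destruct Hv as [v [[c0 [d0 [Hc0 [Hcd0 [Hd0 ->]]]]] Hv]].
  exists (Rmin c0 (1 - d0)). split; [apply Rmin_pos; lra|].
  intros c d Hc Hcd Hcd' Hd1 Hd2.
  pose proof (Rmin_l c0 (1 - d0)). pose proof (Rmin_r c0 (1 - d0)).
  assert (Hin : RInt h c d <= L).
  { apply HLub. exists c, d. repeat split; auto. }
  rewrite (Chasles3 h c c0 d0 d) in Hin |- *; try (apply Hex; lra).
  assert (0 <= RInt h c c0).
  { apply RInt_ge_0; [lra| apply Hex; lra| intros; apply Hpos; lra]. }
  assert (0 <= RInt h d0 d).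
  { apply RInt_ge_0; [lra| apply Hex; lra| intros; apply Hpos; lra]. }
  apply Rabs_def1; lra.
Qed.


Definition A x := - ln x.
Definition B x := - ln (1 - x).
Definition gn n x := ((A x + B x)^(S n) - (A x)^(S n)) / (INR (S n) * x).

Lemma INRS_eq n : match n with 0%nat => 1 | S _ => INR n + 1 end = INR (S n).
Proof. reflexivity. Qed.

Lemma minus_R (a b : R) : minus a b = a - b.
Proof. reflexivity. Qed.

Lemma A_pos x : 0 < x <= 1 -> 0 <= A x.
Proof. intros. unfold A. pose proof (ln_le x 1 ltac:(lra) ltac:(lra)). rewrite ln_1 in H0. lra. Qed.
Lemma B_pos x : 0 <= x < 1 -> 0 <= B x.
Proof. intros. unfold B. pose proof (ln_le (1-x) 1 ltac:(lra) ltac:(lra)). rewrite ln_1 in H0. lra. Qed.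

Lemma gn_pos n x : 0 < x < 1 -> 0 <= gn n x.
Proof.
  intros Hx. unfold gn. pose proof (A_pos x ltac:(lra)). pose proof (B_pos x ltac:(lra)).
  apply Rdiv_le_0_compat.
  - assert (A x ^ S n <= (A x + B x) ^ S n) by (apply pow_incr; lra). lra.
  - apply Rmult_lt_0_compat; [apply lt_0_INR; lia| lra].
Qed.

Lemma inner n x : 0 < x < 1 -> is_RInt (fun y => integrand n x y) (1 - x) 1 (gn n x).
Proof.
  intros Hx.
  set (Phi := fun y => - (- ln (x*y))^(S n) / (INR (S n) * x)).
  replace (gn n x) with (minus (Phi 1) (Phi (1 - x))).
  - apply (is_RInt_derive (V:=R_CompleteNormedModule)).
    + intros y Hy. rewrite Rmin_left, Rmax_right in Hy by lra.
      unfold Phi, integrand. auto_derive.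
      * apply Rmult_lt_0_compat; lra.
      * rewrite INRS_eq. field. split; [lra|]. split;[lra|]. apply not_0_INR; auto.
    + intros y Hy. rewrite Rmin_left, Rmax_right in Hy by lra.
      assert (Hd : ex_derive (fun y => integrand n x y) y).
      { unfold integrand. auto_derive.
        assert (0 < x * y) by (apply Rmult_lt_0_compat; lra). repeat split; auto; lra. }
      exact (ex_derive_continuous _ y Hd).
  - rewrite minus_R. unfold Phi, gn, A, B.
    rewrite Rmult_1_r. rewrite ln_mult by lra. match goal with |- ?a = ?b => change (@eq R a b) end. replace (- (ln x + ln (1 - x))) with (- ln x + - ln (1 - x)) by ring. field. split; [lra|]. apply not_0_INR; auto.
Qed.

Lemma inner_RiemannInt n x (pr : Riemann_integrable (fun y => integrand n x y) (1 - x) 1) :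
  0 < x < 1 -> RiemannInt pr = gn n x.
Proof.
  intros Hx. rewrite <- RInt_Reals. apply is_RInt_unique. apply inner; auto.
Qed.

Lemma ex_RInt_of_derive (f : R -> R) a b : a <= b -> (forall x, a <= x <= b -> ex_derive f x) -> ex_RInt f a b.
Proof.
  intros Hab H. apply (ex_RInt_continuous (V:=R_CompleteNormedModule)).
  intros z Hz. rewrite Rmin_left, Rmax_right in Hz by lra. exact (ex_derive_continuous f z (H z Hz)).
Qed.

Lemma gn_derive n x : 0 < x < 1 -> ex_derive (gn n) x.
Proof.
  intros Hx. unfold gn, A, B. auto_derive. repeat split; try lra.
  rewrite INRS_eq. apply Rgt_not_eq. apply Rmult_lt_0_compat; [apply lt_0_INR; lia| lra].
Qed.

Lemma gn_ex_RInt n c d : 0 < c -> c <= d -> d < 1 -> ex_RInt (gn n) c d.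
Proof. intros. apply ex_RInt_of_derive; auto. intros; apply gn_derive; lra. Qed.

Lemma sumg s x N : s <> 0 -> 0 < x ->
  sum_f_R0 (fun n => s^n * (gn n x / INR (Factorial.fact n))) N =
  sum_f_R0 (fun m => ((s*(A x + B x))^m - (s*A x)^m) / INR (Factorial.fact m)) (S N) / (s * x).
Proof.
  intros Hs Hx. induction N as [|N IH].
  - simpl. unfold gn. simpl. field. lra.
  - rewrite (tech5 _ N), IH. rewrite (tech5 _ (S N)).
    unfold gn. rewrite !Rpow_mult_distr.
    rewrite (fact_simpl (S N)), mult_INR.
    pose proof (INR_fact_neq_0 (S N)).
    assert (INR (S (S N)) <> 0) by (apply not_0_INR; lia).
    replace (s ^ S (S N)) with (s * s ^ S N) by (simpl; ring).
    field. repeat split; auto. lra.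
Qed.

Lemma exp_diff u v :
  Un_cv (fun M => sum_f_R0 (fun m => (u^m - v^m)/INR (Factorial.fact m)) M) (exp u - exp v).
Proof.
  pose proof (proj2_sig (exist_exp u)) as Hu. pose proof (proj2_sig (exist_exp v)) as Hv.
  unfold exp_in, infinite_sum in *. fold (exp u) in Hu. fold (exp v) in Hv.
  assert (Un_cv (fun M => sum_f_R0 (fun i => / INR (Factorial.fact i) * u ^ i) M
      - sum_f_R0 (fun i => / INR (Factorial.fact i) * v ^ i) M) (exp u - exp v)).
  { apply CV_minus; [exact Hu| exact Hv]. }
  eapply Un_cv_ext; [|exact H].
  intros M. cbv beta. rewrite <- minus_sum. apply sum_eq. intros. unfold Rdiv. ring.
Qed.

Lemma limit_le U l a b N : Un_cv U l -> (forall n, (n >= N)%nat -> Rabs (U n - a) <= b) ->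
  Rabs (l - a) <= b.
Proof.
  intros Hcv H. destruct (Rle_or_lt (Rabs (l - a)) b) as [|Hlt]; auto. exfalso.
  destruct (Hcv (Rabs (l - a) - b)) as [N1 HN1]; [lra|].
  specialize (HN1 (Nat.max N N1) ltac:(lia)). specialize (H (Nat.max N N1) ltac:(lia)).
  unfold Rdist in HN1.
  pose proof (Rabs_triang (l - U (Nat.max N N1)) (U (Nat.max N N1) - a)).
  replace (l - U (Nat.max N N1) + (U (Nat.max N N1) - a)) with (l - a) in H0 by ring.
  rewrite Rabs_minus_sym in HN1. lra.
Qed.

Lemma pow_decr q M k : 0 <= q <= 1 -> q ^ (M + k) <= q ^ M.
Proof.
  intros Hq. rewrite pow_add. pose proof (pow_le q M ltac:(lra)).
  assert (q ^ k <= 1). { rewrite <- (pow1 k). apply pow_incr; lra. }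
  pose proof (pow_le q k ltac:(lra)). nra.
Qed.

Lemma tail_bound (c : nat -> R) t s M k : (forall n, 0 <= c n) -> 0 <= t -> t <= s -> 0 < s ->
  Rabs (sum_f_R0 (fun n => (-t)^n * c n) (M + k) - sum_f_R0 (fun n => (-t)^n * c n) M)
  <= (t/s)^(S M) * (sum_f_R0 (fun n => s^n * c n) (M + k) - sum_f_R0 (fun n => s^n * c n) M).
Proof.
  intros Hc Ht Hts Hs. induction k as [|k IH].
  - rewrite Nat.add_0_r, !Rminus_diag, Rabs_R0, Rmult_0_r. lra.
  - rewrite Nat.add_succ_r, !tech5.
    replace (sum_f_R0 (fun n => (- t) ^ n * c n) (M + k) + (- t) ^ S (M + k) * c (S (M + k)) -
      sum_f_R0 (fun n => (- t) ^ n * c n) M) with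
      ((sum_f_R0 (fun n => (- t) ^ n * c n) (M + k) - sum_f_R0 (fun n => (- t) ^ n * c n) M)
       + (- t) ^ S (M + k) * c (S (M + k))) by ring.
    eapply Rle_trans; [apply Rabs_triang|].
    rewrite Rabs_mult, <- RPow_abs, Rabs_Ropp, (Rabs_right t) by lra.
    rewrite (Rabs_right (c _)) by (apply Rle_ge; auto).
    assert (t ^ S (M + k) <= (t / s) ^ S M * s ^ S (M + k)).
    { replace t with ((t / s) * s) at 1 by (field; lra).
      rewrite Rpow_mult_distr. apply Rmult_le_compat_r; [apply pow_le; lra|].
      replace (S (M + k)) with (S M + k)%nat by lia. apply pow_decr.
      split; [apply Rdiv_le_0_compat; lra|]. unfold Rdiv; apply Rmult_le_reg_r with s; [lra|]; rewrite Rmult_assoc, Rinv_l by lra; lra. }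
    pose proof (Hc (S (M + k))).
    assert (t ^ S (M + k) * c (S (M + k)) <= (t / s) ^ S M * s ^ S (M + k) * c (S (M + k)))
      by (apply Rmult_le_compat_r; auto).
    lra.
Qed.


Definition Gs s x := (exp (s * (A x + B x)) - exp (s * A x)) / (s * x).

Lemma sum_le_G s x N : 0 < s -> 0 < x < 1 ->
  sum_f_R0 (fun n => s^n * (gn n x / INR (Factorial.fact n))) N <= Gs s x.
Proof.
  intros Hs Hx. rewrite sumg by lra. unfold Gs.
  unfold Rdiv at 1 2. apply Rmult_le_compat_r.
  { apply Rlt_le, Rinv_0_lt_compat, Rmult_lt_0_compat; lra. }
  pose proof (A_pos x ltac:(lra)). pose proof (B_pos x ltac:(lra)).
  apply sum_incr; [apply exp_diff|].
  intros m. apply Rdiv_le_0_compat; [| apply INR_fact_lt_0].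
  assert ((s * A x) ^ m <= (s * (A x + B x)) ^ m).
  { apply pow_incr. split; [apply Rmult_le_pos; lra|]. apply Rmult_le_compat_l; lra. }
  lra.
Qed.

Lemma term_le_sum (f : nat -> R) n : (forall k, 0 <= f k) -> f n <= sum_f_R0 f n.
Proof.
  intros H. destruct n; simpl; [lra|]. pose proof (cond_pos_sum f n H). lra.
Qed.

Lemma gn_le_G n x : 0 < x < 1 ->
  gn n x <= INR (Factorial.fact n) * 2 ^ n * Gs (1/2) x.
Proof.
  intros Hx.
  pose proof (sum_le_G (1/2) x n ltac:(lra) Hx) as H.
  pose proof (term_le_sum (fun k => (1/2)^k * (gn k x / INR (Factorial.fact k))) n) as H2.
  assert (Hpos : forall k, 0 <= (1/2)^k * (gn k x / INR (Factorial.fact k))).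
  { intros k. apply Rmult_le_pos; [apply pow_le; lra|].
    apply Rdiv_le_0_compat; [apply gn_pos; auto| apply INR_fact_lt_0]. }
  specialize (H2 Hpos). cbv beta in H2.
  pose proof (INR_fact_lt_0 n). pose proof (pow_lt 2 n ltac:(lra)).
  assert (E : gn n x = INR (Factorial.fact n) * 2 ^ n * ((1/2)^n * (gn n x / INR (Factorial.fact n)))).
  { assert (E2 : 2 ^ n * (1/2) ^ n = 1).
    { rewrite <- Rpow_mult_distr. replace (2 * (1/2)) with 1 by field. apply pow1. }
    set (h := (1/2)^n) in *. set (T := 2 ^ n) in *.
    replace (INR (Factorial.fact n) * T * (h * (gn n x / INR (Factorial.fact n)))) with ((T * h) * gn n x)
      by (field; lra). rewrite E2. ring. }
  rewrite E. apply Rmult_le_compat_l; [apply Rmult_le_pos; lra|]. lra.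
Qed.

Lemma exp_shift s y : 0 < y -> exp ((1 - s) * ln y) = exp (- s * ln y) * y.
Proof.
  intros. replace ((1 - s) * ln y) with (- s * ln y + ln y) by ring.
  rewrite exp_plus, exp_ln; auto.
Qed.

Lemma exp_le1 z : z <= 0 -> exp z <= 1.
Proof. intros. rewrite <- exp_0. destruct H; [left; apply exp_increasing; auto| rewrite H; lra]. Qed.

Lemma exp_ge1 z : 0 <= z -> 1 <= exp z.
Proof. intros. rewrite <- exp_0. destruct H; [left; apply exp_increasing; auto| rewrite H; lra]. Qed.

Lemma exp_mono u v : u <= v -> exp u <= exp v.
Proof. intros [H|H]; [left; apply exp_increasing; auto| rewrite H; lra]. Qed.

Lemma Gs_bound s x : 0 < s <= 1 -> 0 < x < 1 ->
  Gs s x <= 4 / s * (exp (- s * ln x) + exp (- s * ln (1 - x))).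
Proof.
  intros Hs Hx. unfold Gs.
  pose proof (A_pos x ltac:(lra)). pose proof (B_pos x ltac:(lra)).
  set (X := exp (s * A x)). set (Y := exp (s * B x)).
  assert (EX : exp (- s * ln x) = X) by (unfold X, A; f_equal; ring).
  assert (EY : exp (- s * ln (1 - x)) = Y) by (unfold Y, B; f_equal; ring).
  rewrite EX, EY. rewrite Rmult_plus_distr_l, exp_plus. fold X Y.
  assert (HX0 : 0 < X) by apply exp_pos.
  assert (HY1 : 1 <= Y) by (apply exp_ge1; apply Rmult_le_pos; lra).
  assert (HXx : X * x <= 1).
  { assert (X <= exp (A x)) by (apply exp_mono; nra).
    unfold A in H1. rewrite exp_Ropp, exp_ln in H1 by lra.
    apply Rmult_le_reg_r with (/ x); [apply Rinv_0_lt_compat; lra|].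
    rewrite Rmult_assoc, Rinv_r, Rmult_1_r, Rmult_1_l by lra. auto. }
  assert (HYx : Y * (1 - x) <= 1).
  { assert (Y <= exp (B x)) by (apply exp_mono; nra).
    unfold B in H1. rewrite exp_Ropp, exp_ln in H1 by lra.
    apply Rmult_le_reg_r with (/ (1 - x)); [apply Rinv_0_lt_compat; lra|].
    rewrite Rmult_assoc, Rinv_r, Rmult_1_r, Rmult_1_l by lra. auto. }
  assert (Key : X * Y - X <= 4 * x * (X + Y)).
  { destruct (Rle_or_lt x (1/2)).
    - assert (Y - 1 <= 2 * x) by nra. nra.
    - nra. }
  replace (4 / s * (X + Y)) with ((4 * x * (X + Y)) / (s * x)) by (field; lra).
  unfold Rdiv. apply Rmult_le_compat_r; auto.
  apply Rlt_le, Rinv_0_lt_compat, Rmult_lt_0_compat; lra.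
Qed.

Lemma Gs_ex_RInt s c d : 0 < c -> c <= d -> d < 1 -> 0 < s -> ex_RInt (Gs s) c d.
Proof.
  intros. apply ex_RInt_of_derive; auto. intros x Hx. unfold Gs, A, B.
  auto_derive. repeat split; try lra. apply Rgt_not_eq. apply Rmult_lt_0_compat; lra.
Qed.

Lemma RInt_Gs s c d : 0 < s < 1 -> 0 < c -> c <= d -> d < 1 ->
  RInt (Gs s) c d <= 8 / (s * (1 - s)).
Proof.
  intros Hs Hc Hcd Hd.
  set (H := fun x => 4 / s * (exp ((1 - s) * ln x) - exp ((1 - s) * ln (1 - x))) / (1 - s)).
  set (h := fun x => 4 / s * (exp (- s * ln x) + exp (- s * ln (1 - x)))).
  assert (Hh : is_RInt h c d (minus (H d) (H c))).
  { apply (is_RInt_derive (V:=R_CompleteNormedModule)).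
    - intros x Hx. rewrite Rmin_left, Rmax_right in Hx by lra.
      unfold H, h. auto_derive; [lra|].
      replace (1 + - x) with (1 - x) by ring. rewrite !exp_shift by lra. match goal with |- ?a = ?b => change (@eq R a b) end. field. repeat split; lra.
    - intros x Hx. rewrite Rmin_left, Rmax_right in Hx by lra.
      assert (Hd' : ex_derive h x) by (unfold h; auto_derive; lra).
      exact (ex_derive_continuous _ x Hd'). }
  apply Rle_trans with (RInt h c d).
  - apply RInt_le; auto.
    + apply Gs_ex_RInt; lra.
    + eexists; exact Hh.
    + intros x Hx. apply Gs_bound; lra.
  - rewrite (is_RInt_unique _ _ _ _ Hh), minus_R. unfold H.
    assert (exp ((1 - s) * ln d) <= 1).
    { apply exp_le1. assert (ln d <= 0) by (rewrite <- ln_1; apply ln_le; lra). nra. }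
    assert (exp ((1 - s) * ln (1 - c)) <= 1).
    { apply exp_le1. assert (ln (1 - c) <= 0) by (rewrite <- ln_1; apply ln_le; lra). nra. }
    pose proof (exp_pos ((1 - s) * ln (1 - d))). pose proof (exp_pos ((1 - s) * ln c)).
    replace (8 / (s * (1 - s))) with (4 / s * (1 - 0) / (1 - s) - 4 / s * (0 - 1) / (1 - s))
      by (field; lra).
    assert (0 < 4 / s) by (apply Rdiv_lt_0_compat; lra).
    assert (forall u v, u <= v -> u / (1 - s) <= v / (1 - s)).
    { intros u v Huv. unfold Rdiv. apply Rmult_le_compat_r; auto.
      apply Rlt_le, Rinv_0_lt_compat; lra. }
    apply Rplus_le_compat; [|apply Ropp_le_contravar]; apply H5; apply Rmult_le_compat_l; lra.
Qed.

Lemma part1 n : exists L, is_I n L.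
Proof.
  set (K := INR (Factorial.fact n) * 2 ^ n).
  assert (HK : 0 <= K) by (unfold K; apply Rmult_le_pos; [apply pos_INR| apply pow_le; lra]).
  destruct (exists_lim01 (gn n) (K * (8 / (1/2 * (1 - 1/2))))) as [L HL].
  - apply gn_ex_RInt.
  - intros; apply gn_pos; auto.
  - intros c d Hc Hcd Hd.
    apply Rle_trans with (RInt (fun x => K * Gs (1/2) x) c d).
    + apply RInt_le; auto.
      * apply gn_ex_RInt; auto.
      * apply (ex_RInt_scal (V:=R_CompleteNormedModule)). apply Gs_ex_RInt; lra.
      * intros x Hx. apply gn_le_G. lra.
    + rewrite (RInt_scal (V:=R_CompleteNormedModule)) by (apply Gs_ex_RInt; lra).
      apply Rmult_le_compat_l; auto. apply RInt_Gs; lra.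
  - exists L. exists (gn n). split.
    + intros x Hx.
      assert (Hex : ex_RInt (fun y => integrand n x y) (1 - x) 1).
      { eexists. apply inner; auto. }
      exists (ex_RInt_Reals_0 _ _ _ Hex). apply inner_RiemannInt; auto.
    + apply lim01_to_improper; auto. apply gn_ex_RInt.
Qed.


Lemma lim01_ext F G L : (forall c d, 0 < c -> c <= d -> d < 1 -> F c d = G c d) ->
  lim01 F L -> lim01 G L.
Proof.
  intros E H e He. destruct (H e He) as [delta [Hd H']]. exists delta. split; auto.
  intros. rewrite <- E by lra. auto.
Qed.

Lemma I_lim I n : is_I n (I n) -> lim01 (RInt (gn n)) (I n).
Proof.
  intros [g [Hg Himp]]. apply (improper_to_lim01 g); auto.
  intros x Hx. destruct (Hg x Hx) as [pr Hpr]. rewrite <- Hpr. apply inner_RiemannInt; auto.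
Qed.

Definition hN t N x := sum_f_R0 (fun n => (-t)^n * (gn n x / INR (Factorial.fact n))) N.

Lemma term_ex_RInt t n c d : 0 < c -> c <= d -> d < 1 ->
  ex_RInt (fun x => (-t)^n * (gn n x / INR (Factorial.fact n))) c d.
Proof.
  intros. apply ex_RInt_of_derive; auto. intros x Hx.
  apply ex_derive_mult; [apply ex_derive_const|].
  apply ex_derive_mult; [apply gn_derive; lra| apply ex_derive_const].
Qed.

Lemma hN_ex_RInt t N c d : 0 < c -> c <= d -> d < 1 -> ex_RInt (hN t N) c d.
Proof.
  intros. unfold hN. apply (RInt_sum (fun n x => (-t)^n * (gn n x / INR (Factorial.fact n)))).
  intros; apply term_ex_RInt; auto.
Qed.

Lemma P_lim I t N : (forall n, is_I n (I n)) ->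
  lim01 (RInt (hN t N)) (sum_f_R0 (fun n => (-t)^n * (I n / INR (Factorial.fact n))) N).
Proof.
  intros HI.
  apply lim01_ext with (fun c d => sum_f_R0 (fun n => (-t)^n / INR (Factorial.fact n) * RInt (gn n) c d) N).
  - intros c d Hc Hcd Hd. unfold hN.
    rewrite (proj2 (RInt_sum (fun n x => (-t)^n * (gn n x / INR (Factorial.fact n))) c d N
       (fun n => term_ex_RInt t n c d Hc Hcd Hd))).
    apply sum_eq. intros n _.
    rewrite (RInt_ext (fun x => (-t)^n * (gn n x / INR (Factorial.fact n))) (fun x => scal ((-t)^n / INR (Factorial.fact n)) (gn n x))).
    + rewrite (RInt_scal (V:=R_CompleteNormedModule)); [reflexivity|]. apply gn_ex_RInt; auto.
    + intros. unfold scal; simpl. unfold mult; simpl. unfold Rdiv. ring.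
  - replace (sum_f_R0 (fun n => (-t)^n * (I n / INR (Factorial.fact n))) N) with
      (sum_f_R0 (fun n => (-t)^n / INR (Factorial.fact n) * I n) N)
      by (apply sum_eq; intros; unfold Rdiv; ring).
    apply lim01_sum. intros n. apply lim01_scal. apply I_lim; auto.
Qed.

Lemma cmp_funcs (f1 f2 Gf : R -> R) L1 L2 e K :
  lim01 (RInt f1) L1 -> lim01 (RInt f2) L2 ->
  (forall c d, 0 < c -> c <= d -> d < 1 ->
     ex_RInt f1 c d /\ ex_RInt f2 c d /\ ex_RInt Gf c d /\ RInt Gf c d <= K) ->
  0 <= e -> (forall x, 0 < x < 1 -> f1 x <= f2 x + e * Gf x) -> L1 <= L2 + e * K.
Proof.
  intros H1 H2 Hc He Hp.
  apply (lim01_cmp (RInt f1) (fun c d => RInt f2 c d + e * K)); auto.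
  { apply lim01_plus; auto. apply lim01_const. }
  exists 1. split; [lra|]. intros c d Hc0 Hcd Hcd' Hd Hd'.
  destruct (Hc c d Hc0 Hcd' Hd') as [E1 [E2 [E3 HK]]].
  assert (RInt f1 c d <= RInt (fun x => f2 x + e * Gf x) c d).
  { apply RInt_le; auto.
    - apply (ex_RInt_plus (V:=R_CompleteNormedModule)); auto.
      apply (ex_RInt_scal (V:=R_CompleteNormedModule)); auto.
    - intros; apply Hp; lra. }
  rewrite (RInt_plus (V:=R_CompleteNormedModule)) in H by
    (auto; apply (ex_RInt_scal (V:=R_CompleteNormedModule)); auto).
  rewrite (RInt_scal (V:=R_CompleteNormedModule)) in H by auto.
  change (RInt f1 c d <= RInt f2 c d + e * RInt Gf c d) in H.
  assert (e * RInt Gf c d <= e * K) by (apply Rmult_le_compat_l; auto). lra.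
Qed.

Lemma hN_tail t s x M k : 0 <= t <= s -> 0 < s -> 0 < x < 1 ->
  Rabs (hN t (M + k) x - hN t M x) <= (t / s) ^ S M * Gs s x.
Proof.
  intros Ht Hs Hx. unfold hN.
  eapply Rle_trans; [apply (tail_bound (fun n => gn n x / INR (Factorial.fact n)) t s M k); try lra|].
  - intros n. apply Rdiv_le_0_compat; [apply gn_pos; auto| apply INR_fact_lt_0].
  - apply Rmult_le_compat_l; [apply pow_le; apply Rdiv_le_0_compat; lra|].
    pose proof (sum_le_G s x (M + k) Hs Hx).
    assert (0 <= sum_f_R0 (fun n => s ^ n * (gn n x / INR (Factorial.fact n))) M).
    { apply cond_pos_sum. intros n. apply Rmult_le_pos; [apply pow_le; lra|].
      apply Rdiv_le_0_compat; [apply gn_pos; auto| apply INR_fact_lt_0]. }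
    lra.
Qed.

Lemma Gs_props s c d : 0 < s < 1 -> 0 < c -> c <= d -> d < 1 ->
  ex_RInt (Gs s) c d /\ RInt (Gs s) c d <= 8 / (s * (1 - s)).
Proof. intros. split; [apply Gs_ex_RInt; lra| apply RInt_Gs; auto]. Qed.

Lemma P_cauchy I t M k : (forall n, is_I n (I n)) -> 0 <= t < 1 ->
  let s := (1 + t) / 2 in
  let P := fun N => sum_f_R0 (fun n => (-t)^n * (I n / INR (Factorial.fact n))) N in
  Rabs (P (M + k)%nat - P M) <= (t / s) ^ S M * (8 / (s * (1 - s))).
Proof.
  intros HI Ht s P.
  assert (Hs : 0 < s < 1) by (unfold s; lra).
  assert (He : 0 <= (t / s) ^ S M) by (apply pow_le; apply Rdiv_le_0_compat; lra).
  assert (Hc : forall c d, 0 < c -> c <= d -> d < 1 ->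
     ex_RInt (hN t (M + k)) c d /\ ex_RInt (hN t M) c d /\ ex_RInt (Gs s) c d /\
     RInt (Gs s) c d <= 8 / (s * (1 - s))).
  { intros. destruct (Gs_props s c d); auto. repeat split; auto; apply hN_ex_RInt; auto. }
  assert (Hc' : forall c d, 0 < c -> c <= d -> d < 1 ->
     ex_RInt (hN t M) c d /\ ex_RInt (hN t (M + k)) c d /\ ex_RInt (Gs s) c d /\
     RInt (Gs s) c d <= 8 / (s * (1 - s))).
  { intros. destruct (Hc c d); intuition. }
  pose proof (cmp_funcs _ _ _ _ _ _ _ (P_lim I t (M + k) HI) (P_lim I t M HI) Hc He) as H1.
  pose proof (cmp_funcs _ _ _ _ _ _ _ (P_lim I t M HI) (P_lim I t (M + k) HI) Hc' He) as H2.
  assert (Hp : forall x, 0 < x < 1 -> Rabs (hN t (M + k) x - hN t M x) <= (t / s) ^ S M * Gs s x).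
  { intros. apply hN_tail; unfold s; lra. }
  unfold P. apply Rabs_le. split.
  - assert (sum_f_R0 (fun n => (-t)^n * (I n / INR (Factorial.fact n))) M <=
      sum_f_R0 (fun n => (-t)^n * (I n / INR (Factorial.fact n))) (M + k) + (t / s) ^ S M * (8 / (s * (1 - s)))).
    { apply H2. intros x Hx. specialize (Hp x Hx). apply Rabs_le_between in Hp. lra. }
    lra.
  - assert (sum_f_R0 (fun n => (-t)^n * (I n / INR (Factorial.fact n))) (M + k) <=
      sum_f_R0 (fun n => (-t)^n * (I n / INR (Factorial.fact n))) M + (t / s) ^ S M * (8 / (s * (1 - s)))).
    { apply H1. intros x Hx. specialize (Hp x Hx). apply Rabs_le_between in Hp. lra. }
    lra.
Qed.


Definition ft t x := (exp (t * ln x) - exp (t * ln x + t * ln (1 - x))) / (t * x).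

Lemma Un_cv_shift U l : Un_cv U l -> Un_cv (fun n => U (S n)) l.
Proof. intros H e He. destruct (H e He) as [N HN]. exists N. intros. apply HN. lia. Qed.

Lemma Un_cv_const k : Un_cv (fun _ => k) k.
Proof. intros e He. exists 0%nat. intros. rewrite R_dist_eq. auto. Qed.

Lemma hN_cv t x : 0 < t -> 0 < x < 1 -> Un_cv (fun N => hN t N x) (ft t x).
Proof.
  intros Ht Hx.
  pose proof (exp_diff (-t * (A x + B x)) (-t * A x)) as H.
  apply Un_cv_shift in H.
  pose proof (CV_mult _ _ _ _ H (Un_cv_const (/ (-t * x)))) as H2.
  cbv beta in H2.
  replace (ft t x) with ((exp (- t * (A x + B x)) - exp (- t * A x)) * / (- t * x)).
  - eapply Un_cv_ext; [|exact H2]. intros N. cbv beta. unfold hN. rewrite sumg by lra.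
    unfold Rdiv. reflexivity.
  - unfold ft, A, B.
    replace (- t * (- ln x + - ln (1 - x))) with (t * ln x + t * ln (1 - x)) by ring.
    replace (- t * - ln x) with (t * ln x) by ring. field. lra.
Qed.

Lemma ft_close t s x N : 0 < t -> t <= s -> 0 < x < 1 ->
  Rabs (ft t x - hN t N x) <= (t / s) ^ S N * Gs s x.
Proof.
  intros Ht Hts Hx. apply (limit_le (fun n => hN t n x) _ _ _ N).
  - apply hN_cv; auto.
  - intros n Hn. replace n with (N + (n - N))%nat by lia. apply hN_tail; lra.
Qed.

Lemma ft_bounds t x : 0 < t < 1 -> 0 < x < 1 ->
  1 - exp (t * ln (1 - x)) <= ft t x <= exp (t * ln x) / t.
Proof.
  intros Ht Hx. unfold ft. rewrite exp_plus.
  set (U := exp (t * ln x)). set (V := exp (t * ln (1 - x))).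
  assert (lnx : ln x < 0) by (rewrite <- ln_1; apply ln_increasing; lra).
  assert (ln1x : ln (1 - x) < 0) by (rewrite <- ln_1; apply ln_increasing; lra).
  assert (HU : x <= U).
  { unfold U. rewrite <- (exp_ln x) at 1 by lra. apply exp_mono. nra. }
  assert (HV : 1 - x <= V).
  { unfold V. rewrite <- (exp_ln (1 - x)) at 1 by lra. apply exp_mono. nra. }
  assert (HV1 : V <= 1) by (apply exp_le1; nra).
  assert (HU0 : 0 < U) by apply exp_pos.
  split.
  - apply Rmult_le_reg_r with (t * x); [apply Rmult_lt_0_compat; lra|].
    unfold Rdiv. rewrite Rmult_assoc, Rinv_l, Rmult_1_r by (apply Rgt_not_eq, Rmult_lt_0_compat; lra).
    assert (0 <= (U - t * x) * (1 - V)) by (apply Rmult_le_pos; nra). nra.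
  - apply Rmult_le_reg_r with (t * x); [apply Rmult_lt_0_compat; lra|].
    unfold Rdiv. rewrite Rmult_assoc, Rinv_l, Rmult_1_r by (apply Rgt_not_eq, Rmult_lt_0_compat; lra).
    replace (U * / t * (t * x)) with (U * x) by (field; lra). assert (0 <= U * (x - (1 - V))) by (apply Rmult_le_pos; nra). nra.
Qed.

Lemma exp_shift2 t y : 0 < y -> exp ((t + 1) * ln y) = exp (t * ln y) * y.
Proof.
  intros. replace ((t + 1) * ln y) with (t * ln y + ln y) by ring.
  rewrite exp_plus, exp_ln; auto.
Qed.

Lemma RInt_ell t c d : 0 < t < 1 -> 0 < c -> c <= d -> d < 1 ->
  ex_RInt (fun x => 1 - exp (t * ln (1 - x))) c d /\
  t / (t + 1) - c - (1 - d) <= RInt (fun x => 1 - exp (t * ln (1 - x))) c d.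
Proof.
  intros Ht Hc Hcd Hd.
  set (Lf := fun x => x + exp ((t + 1) * ln (1 - x)) / (t + 1)).
  assert (Hh : is_RInt (fun x => 1 - exp (t * ln (1 - x))) c d (minus (Lf d) (Lf c))).
  { apply (is_RInt_derive (V:=R_CompleteNormedModule)).
    - intros x Hx. rewrite Rmin_left, Rmax_right in Hx by lra.
      unfold Lf. auto_derive; [lra|].
      replace (1 + - x) with (1 - x) by ring. rewrite !exp_shift2 by lra.
      match goal with |- ?a = ?b => change (@eq R a b) end. field. lra.
    - intros x Hx. rewrite Rmin_left, Rmax_right in Hx by lra.
      assert (Hd' : ex_derive (fun x => 1 - exp (t * ln (1 - x))) x) by (auto_derive; lra).
      exact (ex_derive_continuous _ x Hd'). }
  split; [eexists; exact Hh|].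
  rewrite (is_RInt_unique _ _ _ _ Hh). change (minus (Lf d) (Lf c)) with (Lf d - Lf c). unfold Lf.
  pose proof (exp_pos ((t + 1) * ln (1 - d))).
  assert (exp ((t + 1) * ln (1 - c)) <= 1).
  { apply exp_le1. assert (ln (1 - c) <= 0) by (rewrite <- ln_1; apply ln_le; lra). nra. }
  assert (exp ((t + 1) * ln (1 - c)) / (t + 1) <= 1 / (t + 1)).
  { unfold Rdiv. apply Rmult_le_compat_r; auto. apply Rlt_le, Rinv_0_lt_compat; lra. }
  assert (0 <= exp ((t + 1) * ln (1 - d)) / (t + 1)) by (apply Rdiv_le_0_compat; lra).
  replace (t / (t + 1)) with (1 - 1 / (t + 1)) by (field; lra). lra.
Qed.

Lemma RInt_u t c d : 0 < t < 1 -> 0 < c -> c <= d -> d < 1 ->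
  ex_RInt (fun x => exp (t * ln x) / t) c d /\
  RInt (fun x => exp (t * ln x) / t) c d <= 1 / (t * (t + 1)).
Proof.
  intros Ht Hc Hcd Hd.
  set (Lf := fun x => exp ((t + 1) * ln x) / (t * (t + 1))).
  assert (Hh : is_RInt (fun x => exp (t * ln x) / t) c d (minus (Lf d) (Lf c))).
  { apply (is_RInt_derive (V:=R_CompleteNormedModule)).
    - intros x Hx. rewrite Rmin_left, Rmax_right in Hx by lra.
      unfold Lf. auto_derive; [lra|].
      rewrite !exp_shift2 by lra.
      match goal with |- ?a = ?b => change (@eq R a b) end. field. lra.
    - intros x Hx. rewrite Rmin_left, Rmax_right in Hx by lra.
      assert (Hd' : ex_derive (fun x => exp (t * ln x) / t) x) by (auto_derive; lra).
      exact (ex_derive_continuous _ x Hd'). }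
  split; [eexists; exact Hh|].
  rewrite (is_RInt_unique _ _ _ _ Hh). change (minus (Lf d) (Lf c)) with (Lf d - Lf c). unfold Lf.
  pose proof (exp_pos ((t + 1) * ln c)).
  assert (exp ((t + 1) * ln d) <= 1).
  { apply exp_le1. assert (ln d <= 0) by (rewrite <- ln_1; apply ln_le; lra). nra. }
  assert (0 < t * (t + 1)) by nra.
  unfold Rdiv. rewrite <- Rmult_minus_distr_r. apply Rmult_le_compat_r.
  - apply Rlt_le, Rinv_0_lt_compat; auto.
  - lra.
Qed.

Lemma RInt_le_comb (f g Gf : R -> R) e c d : c <= d -> 0 <= e ->
  ex_RInt f c d -> ex_RInt g c d -> ex_RInt Gf c d ->
  (forall x, c < x < d -> f x <= g x + e * Gf x) ->
  RInt f c d <= RInt g c d + e * RInt Gf c d.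
Proof.
  intros Hcd He E1 E2 E3 Hp.
  assert (RInt f c d <= RInt (fun x => g x + e * Gf x) c d).
  { apply RInt_le; auto.
    apply (ex_RInt_plus (V:=R_CompleteNormedModule)); auto.
    apply (ex_RInt_scal (V:=R_CompleteNormedModule)); auto. }
  rewrite (RInt_plus (V:=R_CompleteNormedModule)) in H by
    (auto; apply (ex_RInt_scal (V:=R_CompleteNormedModule)); auto).
  rewrite (RInt_scal (V:=R_CompleteNormedModule)) in H by auto.
  exact H.
Qed.


Lemma P_lower (I : nat -> R) (HI : forall n, is_I n (I n)) (t : R) (Ht : 0 < t < 1) N :
  let s := (1 + t) / 2 in let K := 8 / (s * (1 - s)) in
  t / (t + 1) - (t / s) ^ S N * K <= sum_f_R0 (fun n => (-t)^n * (I n / INR (Factorial.fact n))) N.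
Proof.
  intros s K.
  assert (Hs : 0 < s < 1) by (unfold s; lra).
  assert (He : 0 <= (t / s) ^ S N) by (apply pow_le; apply Rdiv_le_0_compat; lra).
  apply (lim01_cmp (fun _ _ => t / (t + 1) - (t / s) ^ S N * K) (RInt (hN t N))).
  - apply lim01_const.
  - apply P_lim; auto.
  - exists 1. split; [lra|]. intros c d Hc _ Hcd Hd1 Hd.
    destruct (RInt_ell t c d Ht Hc Hcd Hd) as [E1 B1].
    destruct (Gs_props s c d Hs Hc Hcd Hd) as [E3 B3].
    pose proof (RInt_le_comb (fun x => 1 - exp (t * ln (1 - x))) (hN t N) (Gs s) ((t / s) ^ S N) c d
      Hcd He E1 (hN_ex_RInt t N c d Hc Hcd Hd) E3) as H.
    assert (RInt (fun x => 1 - exp (t * ln (1 - x))) c d <= RInt (hN t N) c d + (t / s) ^ S N * RInt (Gs s) c d).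
    { apply H. intros x Hx. pose proof (ft_bounds t x Ht ltac:(lra)).
      pose proof (ft_close t s x N ltac:(lra) ltac:(unfold s; lra) ltac:(lra)).
      apply Rabs_le_between in H1. lra. }
    assert ((t / s) ^ S N * RInt (Gs s) c d <= (t / s) ^ S N * K) by (apply Rmult_le_compat_l; auto).
    lra.
Qed.

Lemma P_upper (I : nat -> R) (HI : forall n, is_I n (I n)) (t : R) (Ht : 0 < t < 1) N :
  let s := (1 + t) / 2 in let K := 8 / (s * (1 - s)) in
  sum_f_R0 (fun n => (-t)^n * (I n / INR (Factorial.fact n))) N <= 1 / (t * (t + 1)) + (t / s) ^ S N * K.
Proof.
  intros s K.
  assert (Hs : 0 < s < 1) by (unfold s; lra).
  assert (He : 0 <= (t / s) ^ S N) by (apply pow_le; apply Rdiv_le_0_compat; lra).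
  apply (lim01_cmp (RInt (hN t N)) (fun _ _ => 1 / (t * (t + 1)) + (t / s) ^ S N * K)).
  - apply P_lim; auto.
  - apply lim01_const.
  - exists 1. split; [lra|]. intros c d Hc _ Hcd Hd1 Hd.
    destruct (RInt_u t c d Ht Hc Hcd Hd) as [E1 B1].
    destruct (Gs_props s c d Hs Hc Hcd Hd) as [E3 B3].
    pose proof (RInt_le_comb (hN t N) (fun x => exp (t * ln x) / t) (Gs s) ((t / s) ^ S N) c d
      Hcd He (hN_ex_RInt t N c d Hc Hcd Hd) E1 E3) as H.
    assert (RInt (hN t N) c d <= RInt (fun x => exp (t * ln x) / t) c d + (t / s) ^ S N * RInt (Gs s) c d).
    { apply H. intros x Hx. pose proof (ft_bounds t x Ht ltac:(lra)).
      pose proof (ft_close t s x N ltac:(lra) ltac:(unfold s; lra) ltac:(lra)).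
      apply Rabs_le_between in H1. lra. }
    assert ((t / s) ^ S N * RInt (Gs s) c d <= (t / s) ^ S N * K) by (apply Rmult_le_compat_l; auto).
    lra.
Qed.




Lemma bernoulli a b n : 0 <= a -> 0 <= b ->
  a ^ S n + INR (S n) * a ^ n * b <= (a + b) ^ S n.
Proof.
  intros Ha Hb. induction n as [|n IH].
  - simpl. lra.
  - rewrite S_INR.
    change ((a + b) ^ S (S n)) with ((a + b) * (a + b) ^ S n).
    change (a ^ S (S n)) with (a * (a * a ^ n)).
    change (a ^ S n) with (a * a ^ n) in IH |- *.
    set (p := a ^ n) in *. set (k := INR (S n)) in *. set (w := (a + b) ^ S n) in *.
    assert (Hp : 0 <= p) by (apply pow_le; auto).
    assert (Hk : 0 <= k) by apply pos_INR.
    assert (H1 : (a + b) * (a * p + k * p * b) <= (a + b) * w) by (apply Rmult_le_compat_l; lra).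
    assert (0 <= k * p * b * b) by (repeat apply Rmult_le_pos; auto).
    assert (0 <= a * p * b) by (repeat apply Rmult_le_pos; auto).
    assert (0 <= a * k * p * b) by (repeat apply Rmult_le_pos; auto).
    nra.
Qed.

Lemma B_ge_x x : 0 < x < 1 -> x <= B x.
Proof.
  intros Hx. unfold B. pose proof (exp_ineq1_le (- x)).
  assert (ln (1 - x) <= ln (exp (- x))) by (apply ln_le; lra).
  rewrite ln_exp in H0. lra.
Qed.

Lemma gn_ge n x : 0 < x < 1 -> (A x) ^ n <= gn n x.
Proof.
  intros Hx. unfold gn.
  pose proof (A_pos x ltac:(lra)). pose proof (B_pos x ltac:(lra)). pose proof (B_ge_x x Hx).
  pose proof (bernoulli (A x) (B x) n H H0).
  assert (HS : 0 < INR (S n)) by (apply lt_0_INR; lia).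
  apply Rmult_le_reg_r with (INR (S n) * x); [apply Rmult_lt_0_compat; lra|].
  unfold Rdiv. rewrite Rmult_assoc, Rinv_l, Rmult_1_r by (apply Rgt_not_eq, Rmult_lt_0_compat; lra).
  pose proof (pow_le (A x) n H).
  assert (INR (S n) * A x ^ n * x <= INR (S n) * A x ^ n * B x).
  { apply Rmult_le_compat_l; auto. apply Rmult_le_pos; lra. }
  lra.
Qed.

Definition En n x := x * sum_f_R0 (fun k => (- ln x) ^ k / INR (Factorial.fact k)) n.

Lemma En_derive n x : 0 < x -> is_derive (En n) x ((- ln x) ^ n / INR (Factorial.fact n)).
Proof.
  intros Hx. induction n as [|n IH].
  - unfold En. simpl. auto_derive; [auto|]. simpl. field.
  - assert (H2 : is_derive (fun x => x * ((-ln x)^(S n) / INR (Factorial.fact (S n)))) x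
       ((-ln x)^(S n)/INR(Factorial.fact (S n)) - (-ln x)^n/INR(Factorial.fact n))).
    { auto_derive. lra. rewrite INRS_eq.
      change (Factorial.fact n + n * Factorial.fact n)%nat with (Factorial.fact (S n)).
      rewrite fact_simpl, mult_INR. rewrite <- tech_pow_Rmult.
      pose proof (INR_fact_neq_0 n). assert (INR (S n) <> 0) by (apply not_0_INR; lia).
      field. repeat split; auto; lra. }
    pose proof (is_derive_plus _ _ _ _ _ IH H2) as H3.
    replace ((- ln x) ^ S n / INR (Factorial.fact (S n))) with
      (plus ((- ln x) ^ n / INR (Factorial.fact n))
         ((- ln x) ^ S n / INR (Factorial.fact (S n)) - (- ln x) ^ n / INR (Factorial.fact n))).
    + eapply is_derive_ext; [|exact H3]. intros y. unfold En. simpl.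
      change (plus ?u ?v) with (u + v). ring.
    + change (plus ?u ?v) with (u + v). match goal with |- ?a = ?b => change (@eq R a b) end. ring.
Qed.

Lemma RInt_An n c d : 0 < c -> c <= d ->
  ex_RInt (fun x => (A x) ^ n) c d /\
  RInt (fun x => (A x) ^ n) c d = INR (Factorial.fact n) * (En n d - En n c).
Proof.
  intros Hc Hcd.
  assert (Hh : is_RInt (fun x => (A x) ^ n) c d
     (minus (INR (Factorial.fact n) * En n d) (INR (Factorial.fact n) * En n c))).
  { apply (is_RInt_derive (V:=R_CompleteNormedModule) (fun x => INR (Factorial.fact n) * En n x)).
    - intros x Hx. rewrite Rmin_left, Rmax_right in Hx by lra.
      pose proof (is_derive_scal _ x (INR (Factorial.fact n)) _ (En_derive n x ltac:(lra))) as H.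
      replace ((A x) ^ n) with (scal (INR (Factorial.fact n)) ((- ln x) ^ n / INR (Factorial.fact n))).
      + exact H.
      + change (scal ?u ?v) with (u * v). unfold A. match goal with |- ?a = ?b => change (@eq R a b) end. field. apply INR_fact_neq_0.
    - intros x Hx. rewrite Rmin_left, Rmax_right in Hx by lra.
      assert (Hd' : ex_derive (fun x => (A x) ^ n) x) by (unfold A; auto_derive; lra).
      exact (ex_derive_continuous _ x Hd'). }
  split; [eexists; exact Hh|].
  rewrite (is_RInt_unique _ _ _ _ Hh).
  change (minus ?u ?v) with (u - v). match goal with |- ?a = ?b => change (@eq R a b) end. ring.
Qed.

Lemma sum_ge1 x n : 0 < x <= 1 -> 1 <= sum_f_R0 (fun k => (- ln x) ^ k / INR (Factorial.fact k)) n.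
Proof.
  intros Hx. induction n as [|n IH]; [simpl; lra|]. rewrite tech5.
  assert (0 <= (- ln x) ^ S n / INR (Factorial.fact (S n))).
  { apply Rdiv_le_0_compat; [|apply INR_fact_lt_0]. apply pow_le. apply (A_pos x Hx). }
  lra.
Qed.

Lemma En_small n : exists c0, 0 < c0 <= 1/4 /\ En n c0 <= 1/4.
Proof.
  set (Y := 4 * INR (S n) * INR (Factorial.fact (S n))).
  assert (HY : 1 <= Y).
  { unfold Y. assert (1 <= INR (S n)) by (apply (le_INR 1); lia).
    assert (1 <= INR (Factorial.fact (S n))) by (apply (le_INR 1); apply Factorial.lt_O_fact). nra. }
  exists (exp (- Y)).
  assert (Hc0 : 0 < exp (- Y)) by apply exp_pos.
  assert (HE : En n (exp (- Y)) <= 1/4).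
  { unfold En. rewrite ln_exp. rewrite Ropp_involutive.
    assert (Hs : sum_f_R0 (fun k => Y ^ k / INR (Factorial.fact k)) n <= Y ^ n * INR (S n)).
    { rewrite <- sum_cte. apply sum_Rle. intros k Hk.
      assert (Y ^ k <= Y ^ n) by (apply Rle_pow; auto).
      assert (1 <= INR (Factorial.fact k)) by (apply (le_INR 1); apply Factorial.lt_O_fact).
      pose proof (pow_le Y k ltac:(lra)).
      apply Rle_trans with (Y ^ k); auto.
      unfold Rdiv. rewrite <- (Rmult_1_r (Y ^ k)) at 2. apply Rmult_le_compat_l; auto.
      rewrite <- Rinv_1. apply Rinv_le_contravar; lra. }
    assert (He : Y ^ S n / INR (Factorial.fact (S n)) <= exp Y).
    { eapply Rle_trans; [|apply (exp_ge_taylor Y (S n)); lra].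
      apply (term_le_sum (fun k => Y ^ k / INR (Factorial.fact k)) (S n)).
      intros k. apply Rdiv_le_0_compat; [apply pow_le; lra| apply INR_fact_lt_0]. }
    assert (E1 : Y ^ S n / INR (Factorial.fact (S n)) = 4 * INR (S n) * Y ^ n).
    { change (Y ^ S n) with (Y * Y ^ n). unfold Y at 1. field. apply INR_fact_neq_0. }
    rewrite E1 in He. rewrite exp_Ropp.
    pose proof (exp_pos Y).
    apply Rmult_le_reg_l with (exp Y); auto.
    rewrite <- Rmult_assoc, Rinv_r, Rmult_1_l by lra. lra. }
  split; [split|]; auto.
  pose proof (sum_ge1 (exp (- Y)) n).
  assert (exp (- Y) <= 1) by (apply exp_le1; lra).
  unfold En in HE. specialize (H ltac:(lra)). nra.
Qed.

Lemma I_ge I n : is_I n (I n) -> INR (Factorial.fact n) / 2 <= I n.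
Proof.
  intros HI.
  destruct (En_small n) as [c0 [Hc0 HE]].
  apply (lim01_cmp (fun _ _ => INR (Factorial.fact n) / 2) (RInt (gn n))).
  - apply lim01_const.
  - apply I_lim; auto.
  - exists (Rmin c0 (1/4)). split; [apply Rmin_pos; lra|].
    intros c d Hc Hcd Hcd' Hd1 Hd.
    pose proof (Rmin_l c0 (1/4)). pose proof (Rmin_r c0 (1/4)).
    rewrite (Chasles3 (gn n) c c0 (3/4) d) by (apply gn_ex_RInt; lra).
    assert (0 <= RInt (gn n) c c0).
    { apply RInt_ge_0; [lra| apply gn_ex_RInt; lra| intros; apply gn_pos; lra]. }
    assert (0 <= RInt (gn n) (3/4) d).
    { apply RInt_ge_0; [lra| apply gn_ex_RInt; lra| intros; apply gn_pos; lra]. }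
    destruct (RInt_An n c0 (3/4) ltac:(lra) ltac:(lra)) as [Ex EA].
    assert (RInt (fun x => (A x) ^ n) c0 (3/4) <= RInt (gn n) c0 (3/4)).
    { apply RInt_le; [lra| auto| apply gn_ex_RInt; lra| intros; apply gn_ge; lra]. }
    assert (3/4 <= En n (3/4)).
    { unfold En. pose proof (sum_ge1 (3/4) n ltac:(lra)). lra. }
    pose proof (INR_fact_lt_0 n).
    assert (INR (Factorial.fact n) * (1/2) <= INR (Factorial.fact n) * (En n (3/4) - En n c0))
      by (apply Rmult_le_compat_l; lra).
    assert (0 <= c + (1 - d)) by lra.
    lra.
Qed.

Lemma diverge I : (forall n, is_I n (I n)) ->
  ~ exists l, infinite_sum (fun n => (-1) ^ n * I n / INR (Factorial.fact n)) l.
Proof.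
  intros HI [l Hl].
  destruct (Hl (1/4)) as [N HN]; [lra|].
  pose proof (HN N ltac:(lia)). pose proof (HN (S N) ltac:(lia)).
  unfold Rdist in *. rewrite tech5 in H0.
  set (u := (-1) ^ S N * I (S N) / INR (Factorial.fact (S N))) in *.
  assert (Rabs u < 1/2).
  { replace u with ((sum_f_R0 (fun n => (-1) ^ n * I n / INR (Factorial.fact n)) N + u - l)
       - (sum_f_R0 (fun n => (-1) ^ n * I n / INR (Factorial.fact n)) N - l)) by ring.
    eapply Rle_lt_trans; [apply Rabs_triang|]. rewrite Rabs_Ropp. lra. }
  pose proof (I_ge I (S N) (HI (S N))).
  pose proof (INR_fact_lt_0 (S N)).
  unfold u in H1. unfold Rdiv in H1. rewrite !Rabs_mult, pow_1_abs, Rabs_inv in H1.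
  rewrite (Rabs_right (INR _)) in H1 by lra.
  assert (Rabs (I (S N)) * / INR (Factorial.fact (S N)) >= 1/2); [|lra].
  apply Rle_ge. apply Rmult_le_reg_r with (INR (Factorial.fact (S N))); auto.
  rewrite Rmult_assoc, Rinv_l by lra. pose proof (Rle_abs (I (S N))). lra.
Qed.


Lemma cv_lower (P e : nat -> R) l a : Un_cv P l -> (forall N, a <= P N + e N) -> Un_cv e 0 -> a <= l.
Proof.
  intros HP H He.
  pose proof (CV_plus _ _ _ _ HP He) as H2.
  pose proof (@Rle_cv_lim (fun _ => a) (fun N => P N + e N) a (l + 0) H (Un_cv_const a) H2). lra.
Qed.

Lemma cv_upper (P e : nat -> R) l b : Un_cv P l -> (forall N, P N <= b + e N) -> Un_cv e 0 -> l <= b.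
Proof.
  intros HP H He.
  pose proof (CV_plus _ _ _ _ (Un_cv_const b) He) as H2.
  pose proof (@Rle_cv_lim P (fun N => b + e N) l (b + 0) H HP H2). lra.
Qed.

Lemma qpow_cv q K : 0 <= q < 1 -> Un_cv (fun N => q ^ S N * K) 0.
Proof.
  intros Hq.
  assert (H : Un_cv (fun N => q ^ S N) 0).
  { intros e He. destruct (pow_lt_1_zero q ltac:(rewrite Rabs_right; lra) e He) as [N HN].
    exists N. intros n Hn. unfold Rdist. rewrite Rminus_0_r. apply HN. lia. }
  pose proof (CV_mult _ _ _ _ H (Un_cv_const K)). rewrite Rmult_0_l in H0. exact H0.
Qed.

Lemma abel_exists I t : (forall n, is_I n (I n)) -> 0 <= t < 1 ->
  exists l, infinite_sum (fun n => (-1) ^ n * I n / INR (Factorial.fact n) * t ^ n) l /\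
    (0 < t -> t / (t + 1) <= l <= 1 / (t * (t + 1))).
Proof.
  intros HI Ht.
  set (s := (1 + t) / 2). set (K := 8 / (s * (1 - s))). set (q := t / s).
  set (P := fun N => sum_f_R0 (fun n => (-t)^n * (I n / INR (Factorial.fact n))) N).
  assert (Hs : 0 < s < 1) by (unfold s; lra).
  assert (HK : 0 < K) by (unfold K; apply Rdiv_lt_0_compat; [lra| apply Rmult_lt_0_compat; lra]).
  assert (Hq : 0 <= q < 1).
  { unfold q. split; [apply Rdiv_le_0_compat; lra|].
    apply Rmult_lt_reg_r with s; [lra|]. unfold Rdiv. rewrite Rmult_assoc, Rinv_l by lra.
    unfold s. lra. }
  assert (Hc : forall M k, Rabs (P (M + k)%nat - P M) <= q ^ S M * K).
  { intros. apply (P_cauchy I t M k HI Ht). }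
  assert (Hcc : Cauchy_crit P).
  { intros e He.
    destruct (pow_lt_1_zero q ltac:(rewrite Rabs_right; lra) (e / (2 * K))) as [N HN].
    { apply Rdiv_lt_0_compat; lra. }
    exists N. intros n m Hn Hm. unfold Rdist.
    assert (Hb : q ^ S N * K < e / 2).
    { specialize (HN (S N) ltac:(lia)). rewrite Rabs_right in HN by (apply Rle_ge, pow_le; lra).
      apply Rmult_lt_reg_r with (/ K); [apply Rinv_0_lt_compat; lra|].
      rewrite Rmult_assoc, Rinv_r, Rmult_1_r by lra.
      replace (e / 2 * / K) with (e / (2 * K)) by (field; lra). exact HN. }
    pose proof (Hc N (n - N)%nat). pose proof (Hc N (m - N)%nat).
    replace (N + (n - N))%nat with n in H by lia. replace (N + (m - N))%nat with m in H0 by lia.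
    replace (P n - P m) with ((P n - P N) - (P m - P N)) by ring.
    eapply Rle_lt_trans; [apply Rabs_triang|]. rewrite Rabs_Ropp. lra. }
  destruct (Rcomplete.R_complete P Hcc) as [l Hl].
  exists l. split.
  - unfold infinite_sum. intros e He. destruct (Hl e He) as [N HN]. exists N. intros n Hn.
    replace (sum_f_R0 (fun n => (-1) ^ n * I n / INR (Factorial.fact n) * t ^ n) n) with (P n).
    + apply HN; auto.
    + unfold P. apply sum_eq. intros i _.
      replace (- t) with (-1 * t) by ring. rewrite Rpow_mult_distr. unfold Rdiv. ring.
  - intros Ht0. split.
    + apply (cv_lower P (fun N => q ^ S N * K)); auto; [|apply qpow_cv; auto].
      intros N. pose proof (P_lower I HI t ltac:(lra) N). cbv zeta in H. fold s in H. fold K q in H. unfold P. lra.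
    + apply (cv_upper P (fun N => q ^ S N * K)); auto; [|apply qpow_cv; auto].
      intros N. pose proof (P_upper I HI t ltac:(lra) N). cbv zeta in H. fold s in H. fold K q in H. unfold P. lra.
Qed.

Theorem corollary5 :
  (forall n : nat, exists L : R, is_I n L) /\
  (forall I : nat -> R, (forall n, is_I n (I n)) ->
     (~ exists l : R, infinite_sum (fun n => (-1) ^ n * I n / INR (Factorial.fact n)) l) /\
     (exists S : R -> R,
        (forall t, 0 <= t < 1 ->
           infinite_sum (fun n => (-1) ^ n * I n / INR (Factorial.fact n) * t ^ n) (S t)) /\
        (forall eps, 0 < eps -> exists delta, 0 < delta /\
           forall t, 1 - delta < t < 1 -> Rabs (S t - 1 / 2) < eps))).
Proof.
  split; [apply part1|].
  intros I HI. split; [apply diverge; auto|].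
  assert (Hex : forall t, exists l, (0 <= t < 1 ->
     infinite_sum (fun n => (-1) ^ n * I n / INR (Factorial.fact n) * t ^ n) l) /\
     (0 < t < 1 -> t / (t + 1) <= l <= 1 / (t * (t + 1)))).
  { intros t. destruct (Rle_or_lt 0 t); [destruct (Rlt_or_le t 1)|].
    - destruct (abel_exists I t HI ltac:(lra)) as [l [H1 H2]].
      exists l. split; auto. intros; apply H2; lra.
    - exists 0. split; intros; lra.
    - exists 0. split; intros; lra. }
  set (S := fun t => proj1_sig (constructive_indefinite_description _ (Hex t))).
  assert (HS : forall t, (0 <= t < 1 ->
     infinite_sum (fun n => (-1) ^ n * I n / INR (Factorial.fact n) * t ^ n) (S t)) /\
     (0 < t < 1 -> t / (t + 1) <= S t <= 1 / (t * (t + 1)))).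
  { intros t. unfold S. apply (proj2_sig (constructive_indefinite_description _ (Hex t))). }
  exists S. split; [intros; apply HS; auto|].
  intros eps Heps. exists (Rmin (1/2) (eps / 4)). split; [apply Rmin_pos; lra|].
  intros t Ht. pose proof (Rmin_l (1/2) (eps/4)). pose proof (Rmin_r (1/2) (eps/4)).
  assert (Ht' : 1/2 < t < 1) by lra.
  destruct (proj2 (HS t) ltac:(lra)) as [Hlo Hhi].
  assert (Hpos : 0 < t * (t + 1)) by nra.
  assert (L1 : 1/2 - eps < t / (t + 1)).
  { assert (t / (t + 1) - (1/2 - eps) = (t / 2 - 1 / 2 + eps * (t + 1)) / (t + 1)) by (field; lra).
    assert (0 < (t / 2 - 1 / 2 + eps * (t + 1)) / (t + 1)) by (apply Rdiv_lt_0_compat; nra).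
    lra. }
  assert (L2 : 1 / (t * (t + 1)) < 1/2 + eps).
  { assert (1/2 + eps - 1 / (t * (t + 1)) = ((1/2 + eps) * (t * (t + 1)) - 1) / (t * (t + 1)))
      by (field; lra).
    assert (0 < ((1/2 + eps) * (t * (t + 1)) - 1) / (t * (t + 1))).
    { apply Rdiv_lt_0_compat; auto. nra. }
    lra. }
  apply Rabs_def1; lra.
Qed.
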